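(* Let $f_1,\dots,f_N$, $\Phi$, $c$, $\sigma$, $x_k$ and $d_k$ be as in Algorithm X described in the context. Then at every iteration $k$ the backtracking loop terminates after finitely many steps; that is, if $d_k\ne0$ there exists a nonnegative integer $j$ such that $\Phi(x_k+\sigma^jd_k)<\Phi(x_k)+c\sigma^j\Phi'(x_k;d_k)$ (and if $d_k=0$ the loop terminates immediately).
   Context: Standing assumptions: $f_1,\dots,f_N:\mathbb{R}^n\to\mathbb{R}$; (H1) there is $M\in\mathbb{R}$ with $f_j(x)\ge M$ for all $x$ and $j$; (H2) each $f_j\in C^1(\mathbb{R}^n)$ and there is a modulus of continuity $w$ (increasing $w:[0,\infty)\to[0,\infty)$, $w(0)=0$, continuous at $0$) with $\|\nabla f_j(x)-\nabla f_j(y)\|\le w(\|x-y\|)$ for all $x,y$ and $j$. Let $\Phi(x)=\max_{1\le j\le N}f_j(x)$, and $g'(x;d)=\lim_{t\to0^+}\frac{g(x+td)-g(x)}{t}$ denotes the directional derivative. Algorithm X: set $x_0=0$, $c=\sigma=\tfrac12$. At iteration $k$: let $G\in\mathbb{R}^{N\times n}$ have $j$-th row $\nabla f_j(x_k)^T$, $f=(f_1(x_k),\dots,f_N(x_k))^T$; let $\lambda$ be a solution of $\min_\lambda(\tfrac12\lambda^TGG^T\lambda-f^T\lambda)$ subject to $\sum_i\lambda_i=1$, $\lambda_i\ge0$; set $p_k=-G^T\lambda$, and $d_k=0$ if $p_k=0$, otherwise $d_k=p_k/\|p_k\|$. Backtracking loop: for $j=0,1,2,\dots$, with $\alpha=\sigma^j$: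 stop if $d_k=0$, or if $\Phi(x_k+\alpha d_k)<\Phi(x_k)+c\alpha\Phi'(x_k;d_k)$; otherwise increase $j$. With the final $\alpha$ set $\alpha_k=\alpha$, $x_{k+1}=x_k+\alpha_kd_k$, and repeat. *)

(* Defs.v *)
From HB Require Import structures.
From mathcomp Require Import all_boot all_order all_algebra.
From mathcomp Require Import all_classical all_reals all_analysis.
Set Implicit Arguments. Unset Strict Implicit. Unset Printing Implicit Defensive.
Import Order.TTheory GRing.Theory Num.Theory.
Import numFieldNormedType.Exports.
Local Open Scope ring_scope.
Local Open Scope classical_set_scope.

Section AlgorithmX.
Variables (R : realType) (n N : nat).
(* the N+1 functions f_1..f_{N+1} are indexed by 'I_N.+1 (so there is at least one) *)
Variable f : 'I_N.+1 -> 'cV[R]_n -> R.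

Definition enorm (v : 'cV[R]_n) : R := Num.sqrt (\sum_(i < n) v i 0 ^+ 2).

Definition grad (g : 'cV[R]_n -> R) (x : 'cV[R]_n) : 'cV[R]_n :=
  \col_i ('D_(delta_mx i 0) g x).

Definition Phi (x : 'cV[R]_n) : R := \big[Num.max/f ord0 x]_(j < N.+1) f j x.

Definition dirder (g : 'cV[R]_n -> R) (x d : 'cV[R]_n) : R :=
  lim ((fun t : R => (g (x + t *: d) - g x) / t) @ 0^'+).

Definition Gmat (x : 'cV[R]_n) : 'M[R]_(N.+1, n) := \matrix_(j, i) grad (f j) x i 0.
Definition fvec (x : 'cV[R]_n) : 'cV[R]_(N.+1) := \col_j f j x.

Definition qp_obj (x : 'cV[R]_n) (l : 'cV[R]_(N.+1)) : R :=
  2^-1 * (l^T *m Gmat x *m (Gmat x)^T *m l) 0 0 - ((fvec x)^T *m l) 0 0.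

Definition simplex (l : 'cV[R]_(N.+1)) : Prop :=
  \sum_(i < N.+1) l i 0 = 1 /\ forall i, 0 <= l i 0.

Definition qp_solution (x : 'cV[R]_n) (l : 'cV[R]_(N.+1)) : Prop :=
  simplex l /\ forall mu, simplex mu -> qp_obj x l <= qp_obj x mu.

Definition pdir (x : 'cV[R]_n) (l : 'cV[R]_(N.+1)) : 'cV[R]_n := - ((Gmat x)^T *m l).

Definition ddir (x : 'cV[R]_n) (l : 'cV[R]_(N.+1)) : 'cV[R]_n :=
  if pdir x l == 0 then 0 else (enorm (pdir x l))^-1 *: pdir x l.

Definition c_param : R := 2^-1.
Definition sigma_param : R := 2^-1.

Definition armijo (x d : 'cV[R]_n) (j : nat) : Prop :=
  Phi (x + sigma_param ^+ j *: d) < Phi x + c_param * sigma_param ^+ j * dirder Phi x d.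

(* iterate k x : x is a possible k-th iterate x_k of Algorithm X
   (for some choice of QP solutions at the previous iterations);
   the step uses the least j at which the loop stops. *)
Inductive iterate : nat -> 'cV[R]_n -> Prop :=
| iterate0 : iterate 0 0
| iterateS k x l j :
    iterate k x -> qp_solution x l ->
    (ddir x l = 0 -> j = 0%N) ->
    (ddir x l != 0 -> armijo x (ddir x l) j /\ forall i, (i < j)%N -> ~ armijo x (ddir x l) i) ->
    iterate k.+1 (x + sigma_param ^+ j *: ddir x l).

End AlgorithmX.

(* Main.v *)
Require Import Defs.
From HB Require Import structures.
From mathcomp Require Import all_boot all_order all_algebra.
From mathcomp Require Import all_classical all_reals all_analysis.
From mathcomp Require Import ring lra.
Import Order.TTheory GRing.Theory Num.Theory.
Import numFieldNormedType.Exports.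
Local Open Scope ring_scope.
Local Open Scope classical_set_scope.

Section Helpers.
Variable R : realType.

Lemma cvg_bigmax_seq (T : Type) (F : set_system T) (FF : Filter F) (I : Type)
  (r : seq I) (h : I -> T -> R) (g : I -> R) (h0 : T -> R) (g0 : R) :
  h0 @ F --> g0 -> (forall i, h i @ F --> g i) ->
  (fun t => \big[Num.max/h0 t]_(i <- r) h i t) @ F --> \big[Num.max/g0]_(i <- r) g i.
Proof.
move=> H0 Hi; elim: r => [|a r IH].
  by rewrite big_nil; under eq_fun do rewrite big_nil.
rewrite big_cons; under eq_fun do rewrite big_cons.
apply: (@continuous2_cvg _ R R R _ _ _ _ (fun a b => Num.max a b)) => //.
exact: (@max_continuous _ R (g a, _)).
Qed.

Lemma max_affine (t c a b : R) : 0 < t ->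
  (Num.max a b - c) / t = Num.max ((a - c) / t) ((b - c) / t).
Proof.
move=> t0; have mono : forall u v, ((u - c) / t <= (v - c) / t) = (u <= v).
  by move=> u v; rewrite ler_pM2r ?invr_gt0 // lerD2r.
by rewrite !maxEle mono; case: ifP.
Qed.

Lemma bigmax_affine (t c a : R) (I : Type) (r : seq I) (F : I -> R) : 0 < t ->
  (\big[Num.max/a]_(i <- r) F i - c) / t = \big[Num.max/(a - c) / t]_(i <- r) ((F i - c) / t).
Proof.
move=> t0; elim: r => [|b r IH]; first by rewrite !big_nil.
by rewrite !big_cons max_affine // IH.
Qed.

Lemma quad_nonneg (a b : R) :
  (forall s, 0 < s -> s <= 1 -> 0 <= s * a + s ^+ 2 * b) -> 0 <= a.
Proof.
move=> H; rewrite leNgt; apply/negP => a0.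
pose s := - a / (`|b| - a).
have den : 0 < `|b| - a by have := normr_ge0 b; lra.
have s0 : 0 < s by rewrite /s divr_gt0 // oppr_gt0.
have s1 : s <= 1 by rewrite /s ler_pdivrMr // mul1r; have := normr_ge0 b; lra.
have sE : s * (`|b| - a) = - a by rewrite /s mulfVK // gt_eqF.
have := H s s0 s1.
have hb : s ^+ 2 * b <= s ^+ 2 * `|b| by rewrite ler_wpM2l ?sqr_ge0 // ler_norm.
have : s * a + s ^+ 2 * `|b| = s * (s * a).
  by rewrite expr2 -mulrA -mulrDr; congr (_ * _); rewrite mulrBr in sE; lra.
have : s * (s * a) < 0 by rewrite pmulr_rlt0 // pmulr_rlt0.
lra.
Qed.

End Helpers.
Section Helpers2.
Variable R : realType.

Lemma col_sum_delta n (v : 'cV[R]_n) : v = \sum_(i < n) v i 0 *: delta_mx i 0.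
Proof.
rewrite {1}[v]matrix_sum_delta; apply: eq_bigr => i _.
by rewrite big_ord1.
Qed.

Lemma dir_deriv_lin n (g : 'cV[R]_n -> R) x d : differentiable g x ->
  'D_d g x = \sum_(i < n) d i 0 * 'D_(delta_mx i 0) g x.
Proof.
move=> dg; rewrite deriveE // {1}[d]col_sum_delta linear_sum.
by apply: eq_bigr => i _; rewrite linearZ /= deriveE.
Qed.

Lemma sumsq_gt0 n (v : 'cV[R]_n) : v != 0 -> 0 < \sum_(i < n) v i 0 ^+ 2.
Proof.
move=> v0.
have [i vi] : exists i, v i 0 != 0.
  apply/existsP; apply: contraNT v0 => /existsPn H.
  apply/eqP/matrixP => a b; rewrite (ord1 b) mxE; exact/eqP/negbNE/H.
rewrite (bigD1 i) //= ltr_pwDl //; last by apply: sumr_ge0 => j _; exact: sqr_ge0.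
by rewrite lt_neqAle sqr_ge0 andbT eq_sym sqrf_eq0.
Qed.

Lemma quad_expand m (M : 'M[R]_m) (a b : 'cV[R]_m) s :
  ((a + s *: b)^T *m M *m (a + s *: b)) 0 0 =
  (a^T *m M *m a) 0 0 + s * ((a^T *m M *m b) 0 0 + (b^T *m M *m a) 0 0)
  + s ^+ 2 * (b^T *m M *m b) 0 0.
Proof.
have -> : (a + s *: b)^T = a^T + s *: b^T by apply/matrixP => i j; rewrite !mxE.
rewrite !mulmxDl !mulmxDr -!scalemxAr -!scalemxAl -?scalemxAr -?scalemxAl !scalerA.
move: (a^T *m M *m a) (a^T *m M *m b) (b^T *m M *m a) (b^T *m M *m b) => X1 X2 X3 X4.
rewrite !mxE; ring.
Qed.

Lemma sym_form m (M : 'M[R]_m) (a b : 'cV[R]_m) : M^T = M ->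
  (b^T *m M *m a) 0 0 = (a^T *m M *m b) 0 0.
Proof.
move=> MT; transitivity ((b^T *m M *m a)^T 0 0); first by rewrite [RHS]mxE.
by rewrite !trmx_mul trmxK MT mulmxA.
Qed.

End Helpers2.

Section Main.
Variables (R : realType) (n N : nat) (f : 'I_N.+1 -> 'cV[R]_n -> R).

Lemma Phi_attained x : exists a, Phi f x = f a x.
Proof.
rewrite /Phi; elim/big_ind: _ => [|u v [a ->] [b ->]|a _]; try by eexists.
by rewrite maxEle; case: ifP => _; eexists.
Qed.

Lemma le_Phi j x : f j x <= Phi f x.
Proof. exact: le_bigmax. Qed.

Lemma delta_sum m (j : 'I_m) : \sum_(i < m) (((i == j) && (0 == 0 :> 'I_1))%:R : R) = 1.
Proof.
rewrite (bigD1 j) //= big1 ?addr0 ?eqxx // => i ij.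
by rewrite (negbTE ij).
Qed.

Lemma qp_key x l j : qp_solution f x l -> f j x = Phi f x ->
  (((Gmat f x)^T *m l)^T *m ((Gmat f x)^T *m l)) 0 0 <= (Gmat f x *m ((Gmat f x)^T *m l)) j 0.
Proof.
move=> [[l1 l0] lmin] fj.
set G := Gmat f x; set M := G *m G^T; set e : 'cV[R]_N.+1 := delta_mx j 0.
set dl := e - l.
have MT : M^T = M by rewrite /M trmx_mul trmxK.
have objE mu : qp_obj f x mu = 2^-1 * (mu^T *m M *m mu) 0 0 - ((fvec f x)^T *m mu) 0 0.
  by rewrite /qp_obj -(mulmxA mu^T G G^T).
pose B (a b : 'cV[R]_N.+1) : R := (a^T *m M *m b) 0 0.
pose F (a : 'cV[R]_N.+1) : R := ((fvec f x)^T *m a) 0 0.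
have FD a b s : F (a + s *: b) = F a + s * F b.
  by rewrite /F mulmxDr -scalemxAr !mxE.
have Bsym a b : B b a = B a b by rewrite /B sym_form.
have simp s : 0 < s -> s <= 1 -> simplex (l + s *: dl).
  move=> s0 s1; split.
    rewrite /dl; under eq_bigr do rewrite !mxE.
    rewrite big_split /= -mulr_sumr sumrB delta_sum l1; ring.
  move=> i; have -> : (l + s *: dl) i 0 = (1 - s) * l i 0 + s * e i 0.
    by rewrite /dl !mxE; ring.
  have : 0 <= (e i 0) by rewrite /e mxE ler0n.
  have := l0 i; move: (e i 0) (l i 0) => ei li h1 h2.
  apply: addr_ge0; apply: mulr_ge0 => //; lra.
have a_ge0 : 0 <= B l dl - F dl.
  apply: (@quad_nonneg R _ (B dl dl / 2)) => s s0 s1.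
  have := lmin _ (simp s s0 s1).
  rewrite !objE quad_expand -/(F (l + s *: dl)) FD -/(F l) -/(F dl) -/(B l l) -/(B l dl) -/(B dl l) -/(B dl dl).
  rewrite (Bsym l dl); lra.
have E1 : B l dl = B l e - B l l.
  rewrite /B /dl mulmxBr; move: (l^T *m M *m e) (l^T *m M *m l) => X Y; by rewrite !mxE.
have E2 : F dl = F e - F l.
  rewrite /F /dl mulmxBr; move: ((fvec f x)^T *m e) ((fvec f x)^T *m l) => X Y; by rewrite !mxE.
have E3 : B l e = (G *m (G^T *m l)) j 0.
  rewrite Bsym /B /e trmx_delta -mulmxA -rowE mxE /M mulmxA.
  done.
have E4 : B l l = (((G^T *m l)^T *m (G^T *m l)) 0 0).
  by rewrite /B trmx_mul trmxK /M !mulmxA.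
have E5 : F e = f j x.
  by rewrite /F /e -colE !mxE.
have E6 : F l <= Phi f x.
  rewrite /F mxE.
  apply: (@le_trans _ _ (\sum_k Phi f x * l k 0)).
    by apply: ler_sum => k _; rewrite !mxE; apply: ler_wpM2r; [exact: l0|exact: le_Phi].
  by rewrite -mulr_sumr l1 mulr1.
rewrite -E3 -E4; lra.
Qed.

Lemma D_neg x l j : (forall i y, differentiable (f i) y) ->
  qp_solution f x l -> f j x = Phi f x -> pdir f x l != 0 ->
  'D_(ddir f x l) (f j) x < 0.
Proof.
move=> dif qp fj hp.
have key := @qp_key x l j qp fj.
set G := Gmat f x in key; set u := G^T *m l in key.
have pE : pdir f x l = - u by [].
have u0 : u != 0 by apply: contraNneq hp => u0; rewrite pE u0 oppr0.
have en : 0 < enorm (pdir f x l) by rewrite /enorm sqrtr_gt0 sumsq_gt0.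
have uu : 0 < (u^T *m u) 0 0.
  rewrite mxE; under eq_bigr do rewrite mxE -expr2.
  exact: sumsq_gt0.
rewrite /ddir (negbTE hp) dir_deriv_lin //.
have -> : \sum_(i < n) ((enorm (pdir f x l))^-1 *: pdir f x l) i 0 * 'D_(delta_mx i 0) (f j) x
  = (enorm (pdir f x l))^-1 * - (G *m u) j 0.
  rewrite [(G *m u) j 0]mxE -sumrN mulr_sumr; apply: eq_bigr => i _.
  rewrite pE !mxE; ring.
have hc : 0 < (enorm (pdir f x l))^-1 by rewrite invr_gt0.
have hg : 0 < (G *m u) j 0 by lra.
rewrite mulrN oppr_lt0; exact: mulr_gt0.
Qed.

Lemma dq_cvg (g : 'cV[R]_n -> R) x d : differentiable g x ->
  (fun t => (g (x + t *: d) - g x) / t) @ 0^'+ --> 'D_d g x.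
Proof.
move=> dg.
have H : (fun h : R => h^-1 *: ((g \o shift x) (h *: d) - g x)) @ 0^' --> 'D_d g x.
  have := @diff_derivable R _ _ g x d dg; rewrite /derivable; exact.
have := cvg_dnbhs_at_right H.
suff -> : (fun h : R => h^-1 *: ((g \o shift x) (h *: d) - g x)) =
          (fun t => (g (x + t *: d) - g x) / t) by [].
by apply: funext => t /=; rewrite [t *: d + x]addrC mulrC.
Qed.

Lemma line_cvg (g : 'cV[R]_n -> R) x d : differentiable g x ->
  (fun t : R => g (x + t *: d)) @ 0^'+ --> g x.
Proof.
move=> dg; apply: cvg_at_right_filter.
have H1 : (fun t : R => x + t *: d) @ 0 --> x.
  rewrite -[X in _ --> X](addr0 x); apply: cvgD; first exact: cvg_cst.
  rewrite -(scale0r d); apply: cvgZr_tmp; exact: cvg_id.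
have H2 := differentiable_continuous dg.
exact: (@cvg_comp _ _ _ _ _ _ _ _ H1 H2).
Qed.

End Main.

Theorem theorem4 (R : realType) (n N : nat) (f : 'I_N.+1 -> 'cV[R]_n -> R) (M : R) :
  (* (H1) *)
  (forall j x, M <= f j x) ->
  (* each f_j is C^1 *)
  (forall j, (forall x, differentiable (f j) x) /\ continuous (grad (f j))) ->
  (* (H2) *)
  (exists w : R -> R,
      (forall a b, 0 <= a -> a <= b -> w a <= w b) /\
      (forall t, 0 <= t -> 0 <= w t) /\
      w 0 = 0 /\ (w @ 0^'+ --> 0) /\
      (forall j x y, enorm (grad (f j) x - grad (f j) y) <= w (enorm (x - y)))) ->
  forall (k : nat) (x : 'cV[R]_n) (l : 'cV[R]_(N.+1)),
    iterate f k x -> qp_solution f x l ->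
    ddir f x l != 0 ->
    exists j : nat, armijo f x (ddir f x l) j.
Proof.
move=> _ Hd _ _ x l _ qp hd.
have dif : forall i y, differentiable (f i) y by move=> i y; case: (Hd i) => H _; exact: H.
have hp : pdir f x l != 0.
  by apply: contraNneq hd; rewrite /ddir => ->; rewrite eqxx.
set d := ddir f x l.
have [a0 Ha0] := @Phi_attained R n N f x.
pose A j := f j x == Phi f x.
pose h j t := (f j (x + t *: d) - Phi f x) / t.
pose k j t := if A j then h j t else h a0 t.
pose gg j := if A j then 'D_d (f j) x else 'D_d (f a0) x.
pose L := \big[Num.max/gg ord0]_(j < N.+1) gg j.
pose q t := (Phi f (x + t *: d) - Phi f x) / t.
have Aa0 : A a0 by rewrite /A Ha0.
have kcvg j : k j @ 0^'+ --> gg j.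
  rewrite /k /gg; case: ifP => Aj.
    suff -> : h j = (fun t => (f j (x + t *: d) - f j x) / t) by exact: dq_cvg.
    by rewrite (eqP Aj).
  suff -> : h a0 = (fun t => (f a0 (x + t *: d) - f a0 x) / t) by exact: dq_cvg.
  by rewrite -Ha0.
have Lcvg : (fun t => \big[Num.max/k ord0 t]_(j < N.+1) k j t) @ 0^'+ --> L.
  exact: cvg_bigmax_seq.
have near1 : \forall t \near 0^'+, forall j, ~~ A j -> f j (x + t *: d) < f a0 (x + t *: d).
  apply: filter_forall => j; case Aj : (A j); first by apply: nearW.
  have H : (fun t : R => f a0 (x + t *: d) - f j (x + t *: d)) @ 0^'+ --> f a0 x - f j x.
    by apply: cvgB; apply: line_cvg.
  have pos : 0 < f a0 x - f j x.
    rewrite subr_gt0 -Ha0 lt_neqAle le_Phi andbT.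
    by move: Aj; rewrite /A => ->.
  apply: filterS (cvgr_gt _ H _ pos) => t /= ht _; lra.
have near2 : \forall t \near 0^'+, 0 < t := nbhs_right_gt 0.
have EQ : \forall t \near 0^'+, \big[Num.max/k ord0 t]_(j < N.+1) k j t = q t.
  near=> t.
  have t0 : 0 < t by near: t; exact: near2.
  have Hn : forall j, ~~ A j -> f j (x + t *: d) < f a0 (x + t *: d) by near: t; exact: near1.
  rewrite /q [Phi f (x + t *: d)]/Phi bigmax_affine //.
  transitivity (\big[Num.max/h ord0 t]_(j < N.+1) h j t); last by [].
  have hk j : h j t <= \big[Num.max/k ord0 t]_(i < N.+1) k i t.
    case Aj : (A j).
      have -> : h j t = k j t by rewrite /k Aj.
      exact: le_bigmax.
    apply: (@le_trans _ _ (h a0 t)).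
      rewrite /h ler_pM2r ?invr_gt0 // lerD2r; apply/ltW; apply: Hn; rewrite Aj.
      done.
    have -> : h a0 t = k a0 t by rewrite /k Aa0.
    exact: le_bigmax.
  have kh j : k j t <= \big[Num.max/h ord0 t]_(i < N.+1) h i t.
    by rewrite /k; case: ifP => _; exact: le_bigmax.
  apply/le_anti/andP; split.
    by apply: bigmax_le; [exact: kh | move=> j _; exact: kh].
  by apply: bigmax_le; [exact: hk | move=> j _; exact: hk].
have qcvg : q @ 0^'+ --> L by apply: cvg_trans (near_eq_cvg EQ) Lcvg.
have Lneg : L < 0.
  rewrite /L; apply: bigmax_lt => [|j _]; rewrite /gg; case: ifP => Aj;
    apply: D_neg => //; by [exact/eqP | rewrite Ha0].
have dE : dirder (Phi f) x d = L by apply: cvg_lim qcvg.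
have u_pos m : 0 < sigma_param R ^+ m :> R.
  by rewrite exprn_gt0 // /sigma_param invr_gt0.
have ucvg : (fun m => sigma_param R ^+ m) @ \oo --> (0:R).
  apply: cvg_expr; by rewrite /sigma_param ger0_norm ?invr_ge0 // invf_lt1 // ltr1n.
have := (proj1 (cvg_at_rightP q 0 L) qcvg) (fun m => sigma_param R ^+ m) (conj u_pos ucvg).
move=> /cvgr_lt /(_ (L / 2)) H.
have [|m Hm] := filter_ex (H _); first lra.
exists m; rewrite /armijo dE /c_param.
move: Hm; rewrite /q ltr_pdivrMr //; lra.
Unshelve. all: by end_near.
Qed.
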